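(* Let $\mathbb{K}$ be an infinite field of characteristic zero and $\Delta$ a pure $2$-dimensional simplicial complex on vertex set $[n]$. If the facet ideal $\mathcal{F}(\Delta)\subset\mathbb{K}[x_1,\dots,x_n]$ is of linear type, then $A(\Delta)$ has the strong Lefschetz property.
   Context: Let $S=\mathbb{K}[x_1,\dots,x_n]$. For a simplicial complex $\Delta$ on $[n]$, $\mathcal{N}(\Delta)=(x_\tau:\tau\subseteq[n],\ \tau\notin\Delta)$ is the Stanley–Reisner ideal and $\mathcal{F}(\Delta)=(x_F:F\text{ a facet of }\Delta)$ the facet ideal, with $x_\tau=\prod_{j\in\tau}x_j$. $A(\Delta)=S/(\mathcal{N}(\Delta)+(x_1^2,\dots,x_n^2))$. A graded artinian algebra $A$ has the strong Lefschetz property if for a general linear form $L$ all maps $\times L^j:A_i\to A_{i+j}$ have full rank. An ideal $I\subset S$ is of linear type if its Rees algebra $S[It]=\bigoplus_{i\ge0}I^it^i$ is isomorphic to the symmetric algebra of $I$ (equivalently, the defining ideal of $S[It]$ as a quotient of $S[w_1,\dots,w_s]$, $w_k\mapsto g_kt$ for generators $g_k$ of $I$, is generated by polynomials linear in the $w_k$). *)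

(* Defs.v *)
From HB Require Import structures.
From mathcomp Require Import all_boot all_order all_algebra.
From mathcomp Require Export multinomials.mpoly.
Set Implicit Arguments. Unset Strict Implicit. Unset Printing Implicit Defensive.
Import Order.TTheory GRing.Theory Num.Theory.
Local Open Scope ring_scope.

Section Defs.
Variable K : fieldType.

Definition in_ideal (m : nat) (gs : seq {mpoly K[m]}) (f : {mpoly K[m]}) : Prop :=
  exists cs : seq {mpoly K[m]}, size cs = size gs /\
    f = \sum_(i < size gs) cs`_i * gs`_i.

Definition in_ideal_set (m : nat) (P : {mpoly K[m]} -> Prop) (f : {mpoly K[m]}) : Prop :=
  exists gs : seq {mpoly K[m]}, (forall g, g \in gs -> P g) /\ in_ideal gs f.

Variable n : nat.

Definition simplicial_complex (D : {set {set 'I_n}}) : Prop :=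
  set0 \in D /\
  (forall s t : {set 'I_n}, t \in D -> s \subset t -> s \in D) /\
  (forall i : 'I_n, [set i] \in D).

Definition facets (D : {set {set 'I_n}}) : {set {set 'I_n}} :=
  [set F in D | [forall G in D, (F \subset G) ==> (G == F)]].

Definition pure_of_dim (d : nat) (D : {set {set 'I_n}}) : Prop :=
  forall F, F \in facets D -> #|F| = d.+1.

Definition xmon (tau : {set 'I_n}) : {mpoly K[n]} := \prod_(j in tau) 'X_j.

Definition SR_gens (D : {set {set 'I_n}}) : seq {mpoly K[n]} :=
  [seq xmon tau | tau <- enum (~: D)].

Definition facet_gens (D : {set {set 'I_n}}) : seq {mpoly K[n]} :=
  [seq xmon F | F <- enum (facets D)].

(* generators of the ideal N(D) + (x_1^2,...,x_n^2), so A(D) = S / this ideal *)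
Definition AD_gens (D : {set {set 'I_n}}) : seq {mpoly K[n]} :=
  SR_gens D ++ [seq 'X_i ^+ 2 | i <- enum 'I_n].

(* For generators g_0..g_{s-1} of I, the ring S[w_1..w_s] is {mpoly K[n + s]},
   x_i = 'X_(lshift s i), w_k = 'X_(rshift n k).  The map to S[t] = {poly S}
   sends x_i |-> x_i and w_k |-> g_k t. *)
Definition rees_map (gs : seq {mpoly K[n]}) (p : {mpoly K[n + size gs]})
  : {poly {mpoly K[n]}} :=
  mmap (fun c : K => (c%:MP)%:P)
       (fun i : 'I_(n + size gs) =>
          match split i with
          | inl j => ('X_j)%:P
          | inr k => (gs`_k)%:P * 'X
          end) p.

Definition wdeg (s : nat) (m : 'X_{1..n + s}) : nat :=
  (\sum_(k < s) m (rshift n k))%N.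

Definition linear_in_w (s : nat) (p : {mpoly K[n + s]}) : bool :=
  all (fun m => wdeg m == 1%N) (msupp p).

Definition linear_type (gs : seq {mpoly K[n]}) : Prop :=
  forall p : {mpoly K[n + size gs]}, rees_map p = 0 ->
    in_ideal_set (fun q => rees_map q = 0 /\ linear_in_w q) p.

(* multiplication by L^j from A_i to A_{i+j} has full rank, where
   A_i = S_i / I_i (I homogeneous): injective or surjective *)
Definition mult_full_rank (gs : seq {mpoly K[n]}) (L : {mpoly K[n]}) (i j : nat) : Prop :=
  (forall f : {mpoly K[n]}, f \is i.-homog ->
      in_ideal gs (L ^+ j * f) -> in_ideal gs f)
  \/
  (forall g : {mpoly K[n]}, g \is (i + j)%N.-homog ->
      exists f : {mpoly K[n]}, f \is i.-homog /\ in_ideal gs (g - L ^+ j * f)).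

Definition linform (c : 'I_n -> K) : {mpoly K[n]} := \sum_(i < n) c i *: 'X_i.

(* SLP: for a general linear form L = sum c_i x_i, i.e. for all c outside
   a proper Zariski-closed set {P = 0}, P a nonzero polynomial, all maps
   x L^j : A_i -> A_{i+j} have full rank *)
Definition strong_lefschetz (gs : seq {mpoly K[n]}) : Prop :=
  exists P : {mpoly K[n]}, P != 0 /\
    forall c : 'I_n -> K, P.@[c] != 0 ->
      forall i j : nat, mult_full_rank gs (linform c) i j.

End Defs.

(* Main.v *)
Require Import Defs.
From HB Require Import structures.
From mathcomp Require Import all_boot all_order all_algebra.
From mathcomp Require Import multinomials.mpoly.
From mathcomp Require Import zify ring.
Set Implicit Arguments. Unset Strict Implicit. Unset Printing Implicit Defensive.
Import Order.TTheory GRing.Theory Num.Theory.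
Local Open Scope ring_scope.


Section Basics.
Variable K : fieldType.
Variable n : nat.
Implicit Types (h g f : {mpoly K[n]}) (s t : {set 'I_n}).

Definition mono s : 'X_{1..n} := [multinom (i \in s : nat) | i < n].

Lemma monoE s i : mono s i = (i \in s).
Proof. by rewrite mnmE. Qed.

Lemma mono_sum s : mono s = (\sum_(i in s) U_(i))%MM.
Proof.
apply/mnmP => i; rewrite monoE mnm_sumE.
rewrite (eq_bigr (fun j => (j == i) : nat)); last by move=> j _; rewrite mnm1E.
case: (boolP (i \in s)) => hi.
  rewrite (bigD1 i) //= eqxx big1 // => j /andP[_ /negbTE ->] //.
rewrite big1 // => j js; case: eqP => // E; subst; by rewrite js in hi.
Qed.

Lemma xmonE s : xmon K s = 'X_[mono s].
Proof. by rewrite /xmon mprodXE mono_sum. Qed.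

Lemma mdeg_mono s : mdeg (mono s) = #|s|.
Proof.
rewrite mdegE (eq_bigr (fun i => (i \in s) : nat)); last by move=> i _; rewrite monoE.
rewrite -sum1_card [in RHS]big_mkcond /=; apply: eq_bigr => i _; by case: (i \in s).
Qed.

Lemma monoS_inj : injective mono.
Proof.
move=> s t /mnmP E; apply/setP => i; move: (E i); rewrite !monoE.
by case: (i \in s); case: (i \in t).
Qed.

Lemma mono_le s t : (mono s <= mono t)%MM = (s \subset t).
Proof.
apply/mnm_lepP/subsetP => [H i iS|H i]; first by move: (H i); rewrite !monoE iS; case: (i \in t).
rewrite !monoE; case: (boolP (i \in s)) => [/H -> //|]; by [].
Qed.

Lemma mcoeffMXm h m k :
  (h * 'X_[m])@_k = if (m <= k)%MM then h@_(k - m) else 0.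
Proof.
case: ifP => le.
  by rewrite -{1}(submK le) addmC mcoeffMX.
rewrite {1}(mpolyE h) mulr_suml raddf_sum /= big1 // => m' _.
rewrite -scalerAl -mpolyXD mcoeffZ mcoeffX.
case: eqP => [E|]; last by rewrite mulr0.
by move: le; rewrite -E lem_addl.
Qed.

Definition idl (gs : seq {mpoly K[n]}) f :=
  exists c : 'I_(size gs) -> {mpoly K[n]}, f = \sum_i c i * gs`_i.

Lemma idlE gs f : in_ideal gs f <-> idl gs f.
Proof.
split => [[cs [Hs ->]]|[c ->]]; first by exists (fun i => cs`_i).
exists (mkseq (fun i => odflt 0 (omap c (insub i))) (size gs)); rewrite size_mkseq; split => //.
by apply: eq_bigr => i _; rewrite nth_mkseq // valK.
Qed.

Lemma idl0 gs : idl gs 0.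
Proof. by exists (fun _ => 0); rewrite big1 // => i _; rewrite mul0r. Qed.

Lemma idlD gs f g : idl gs f -> idl gs g -> idl gs (f + g).
Proof.
move=> [c ->] [d ->]; exists (fun i => c i + d i); rewrite -big_split /=.
by apply: eq_bigr => i _; rewrite mulrDl.
Qed.

Lemma idlM gs h f : idl gs f -> idl gs (h * f).
Proof.
move=> [c ->]; exists (fun i => h * c i); rewrite mulr_sumr.
by apply: eq_bigr => i _; rewrite mulrA.
Qed.

Lemma idl_sum gs (I : Type) (r : seq I) (P : pred I) (F : I -> {mpoly K[n]}) :
  (forall i, P i -> idl gs (F i)) -> idl gs (\sum_(i <- r | P i) F i).
Proof.
move=> H; elim/big_rec: _ => [|i x Pi Hx]; first exact: idl0.
exact: idlD (H _ Pi) Hx.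
Qed.

Lemma idl_mem gs g : g \in gs -> idl gs g.
Proof.
move=> gin; have hi : (index g gs < size gs)%N by rewrite index_mem.
exists (fun j => ((j : nat) == index g gs)%:R).
rewrite (bigD1 (Ordinal hi)) //= eqxx mul1r big1 ?addr0; first by rewrite nth_index.
move=> j /negbTE; rewrite -val_eqE /= => ->; by rewrite mul0r.
Qed.

End Basics.


Section Ideal.
Variable K : fieldType.
Variable n : nat.
Variable D : {set {set 'I_n}}.
Hypothesis hsub : forall s t : {set 'I_n}, t \in D -> s \subset t -> s \in D.
Implicit Types (h g f : {mpoly K[n]}) (s t : {set 'I_n}).

Definition van f := forall s, s \in D -> f@_(mono s) = 0.

Lemma ideal_van f : in_ideal (AD_gens K D) f -> van f.
Proof.
move=> /idlE [c ->] s sD; rewrite raddf_sum /= big1 // => i _.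
have : (AD_gens K D)`_i \in AD_gens K D by rewrite mem_nth.
rewrite mem_cat => /orP [/mapP [t tin ->]|/mapP [j _ ->]].
  rewrite xmonE mcoeffMXm mono_le; case: ifP => // ts.
  by move: tin; rewrite mem_enum inE (hsub sD ts).
rewrite mpolyXn mcoeffMXm; case: ifP => // /mnm_lepP /(_ j).
by rewrite mulmnE mnm1E eqxx monoE; case: (j \in s).
Qed.

Lemma idl_AD_X (m : 'X_{1..n}) : (m <> mono [set i | m i != 0%N] \/ [set i | m i != 0%N] \notin D) ->
  idl (AD_gens K D) ('X_[m] : {mpoly K[n]}).
Proof.
case: (boolP [exists i, 1 < m i]%N) => [/existsP [i hi] _|/existsPn hle].
  have le : (U_(i) *+ 2 <= m)%MM.
    apply/mnm_lepP => j; rewrite mulmnE mnm1E; case: eqP => [<-|] //=.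
  rewrite -(submK le) mpolyXD -mpolyXn; apply: idlM; apply: idl_mem.
  by rewrite mem_cat; apply/orP; right; apply: map_f; rewrite mem_enum.
have me : m = mono [set i | m i != 0%N].
  apply/mnmP => i; rewrite monoE inE; move: (hle i); rewrite -leqNgt.
  by case: (m i) => [|[]].
move=> [//|nD]; rewrite me -xmonE; apply: idl_mem.
by rewrite mem_cat; apply/orP; left; apply: map_f; rewrite mem_enum inE.
Qed.

Lemma van_ideal f : van f -> in_ideal (AD_gens K D) f.
Proof.
move=> hv; apply/idlE; rewrite (mpolyE f); apply: idl_sum => m _.
case: (boolP ((m == mono [set i | m i != 0%N]) && ([set i | m i != 0%N] \in D))) => [/andP[/eqP me sD]|H].
  rewrite me hv // scale0r; exact: idl0.
rewrite -mul_mpolyC; apply: idlM; apply: idl_AD_X.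
by move: H; rewrite negb_and => /orP [/eqP|]; auto.
Qed.

End Ideal.


Section Lin.
Variable K : fieldType.
Variable n : nat.
Variable c : 'I_n -> K.
Implicit Types (h g f : {mpoly K[n]}) (s t : {set 'I_n}).
Local Notation L := (linform c).

Definition cp s := \prod_(k in s) c k.

Lemma mono_subU s i : i \in s -> (mono s - U_(i) = mono (s :\ i))%MM.
Proof.
move=> iS; apply/mnmP => j; rewrite mnmBE mnm1E !monoE !inE.
case: (eqVneq i j) => [<-|ne]; first by rewrite iS.
by rewrite subn0.
Qed.

Lemma coefL h s : (L * h)@_(mono s) = \sum_(k in s) c k * h@_(mono (s :\ k)).
Proof.
rewrite /linform mulr_suml raddf_sum /= [RHS]big_mkcond /=; apply: eq_bigr => i _.
rewrite -scalerAl mcoeffZ ['X__ * h]mulrC mcoeffMXm lep1mP monoE.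
case: (boolP (i \in s)) => iS /=; last by rewrite mulr0.
by rewrite mono_subU.
Qed.

Lemma coefLX j h s : (L ^+ j * h)@_(mono s) = j`!%:R *
  \sum_(t : {set 'I_n} | (t \subset s) && (#|t| + j == #|s|)%N) cp (s :\: t) * h@_(mono t).
Proof.
elim: j h s => [|j IH] h s.
  rewrite expr0 mul1r fact0 mul1r (big_pred1 s) ?setDv /cp ?big_set0 ?mul1r //.
  move=> t /=; rewrite addn0; apply/andP/eqP => [[ts /eqP ct]|->]; last by rewrite subxx.
  by apply/eqP; rewrite eqEcard ts ct /=.
rewrite exprS -mulrA coefL.
under eq_bigr => k ks do rewrite IH mulrCA.
rewrite -mulr_sumr factS natrM [_.+1%:R * _]mulrC -mulrA; congr (_ * _).
under eq_bigr => k ks do rewrite mulr_sumr.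
rewrite (exchange_big_dep (fun t => (t \subset s) && (#|t| + j.+1 == #|s|)%N)) /=; last first.
  move=> k t ks /andP [ts /eqP ct]; apply/andP; split.
    by apply: subset_trans ts (subD1set _ _).
  by rewrite (cardsD1 k s) ks -ct addnS addnC.
rewrite mulr_sumr; apply: eq_bigr => t /andP [ts /eqP ct].
rewrite (eq_bigl (fun k => k \in s :\: t)); last first.
  move=> k; rewrite inE; case: (boolP (k \in s)) => ks; rewrite ?andbF ?andbT //=.
  rewrite subsetD1 ts /=.
  have -> : #|s :\ k| = (#|t| + j)%N.
    by have := cardsD1 k s; rewrite ks -ct addnS add1n => -[] <-.
  by rewrite eqxx andbT.
rewrite (eq_bigr (fun _ => cp (s :\: t) * h@_(mono t))); last first.
  move=> i iD; rewrite mulrA; congr (_ * _).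
  rewrite /cp [in RHS](big_setD1 i iD); congr (_ * _).
  by apply: eq_bigl => x; rewrite !inE; case: (x \notin t); case: (x != i).
rewrite sumr_const.
have -> : #|s :\: t| = j.+1 by rewrite cardsD (setIidPr ts) -ct addnS subSn ?leq_addr // addnC addnK.
by rewrite mulr_natl.
Qed.

End Lin.


Section Comb.
Variable n : nat.
Variable D : {set {set 'I_n}}.
Hypothesis hD : simplicial_complex D.
Hypothesis hpure : pure_of_dim 2 D.
Implicit Types (s t : {set 'I_n}).

Lemma sub_face s t : t \in D -> s \subset t -> s \in D.
Proof. by case: hD => _ [H _]; apply: H. Qed.

Lemma facetP F : F \in facets D -> F \in D /\ #|F| = 3%N.
Proof. by move=> FF; split; [move: FF; rewrite inE => /andP[]| exact: hpure]. Qed.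

Lemma face_in_facet s : s \in D -> exists2 F, F \in facets D & s \subset F.
Proof.
move=> sD.
case: (@arg_maxnP {set 'I_n} s (fun t => (t \in D) && (s \subset t)) (fun t => #|t|)).
  by rewrite sD subxx.
move=> t /andP [tD st] Hmax; exists t => //.
rewrite inE tD /=; apply/forall_inP => G GD; apply/implyP => tG.
apply/eqP; apply/eqP; rewrite eq_sym eqEcard tG /=.
by apply: Hmax; rewrite GD (subset_trans st tG).
Qed.

Lemma card_face s : s \in D -> (#|s| <= 3)%N.
Proof.
move=> /face_in_facet [F /facetP [_ <-] sF]; exact: subset_leq_card.
Qed.

Lemma face3_facet s : s \in D -> #|s| = 3%N -> s \in facets D.
Proof.
move=> sD cs; case: (face_in_facet sD) => F FF sF.
have := facetP FF => -[_ cF].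
have -> // : s = F by apply/eqP; rewrite eqEcard sF cs cF /=.
Qed.

Lemma exists_facet : exists F, F \in facets D.
Proof.
case: hD => h0 _; case: (face_in_facet h0) => F FF _; by exists F.
Qed.

Lemma vertex_facet (k : 'I_n) : exists2 F, F \in facets D & k \in F.
Proof.
case: hD => _ [_ h1]; case: (face_in_facet (h1 k)) => F FF sF.
by exists F => //; apply: (subsetP sF); rewrite inE.
Qed.

End Comb.


Section SLP.
Variable K : fieldType.
Hypothesis charK0 : [pchar K] =i pred0.
Variable n : nat.
Variable D : {set {set 'I_n}}.
Hypothesis hD : simplicial_complex D.
Hypothesis hpure : pure_of_dim 2 D.
Variable c : 'I_n -> K.
Hypothesis hc : forall i, c i != 0.
Implicit Types (h g f : {mpoly K[n]}) (s t : {set 'I_n}).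
Local Notation L := (linform c).
Local Notation I := (AD_gens K D).

Lemma hsub : forall s t, t \in D -> s \subset t -> s \in D.
Proof. exact: sub_face. Qed.

Lemma natr_neq0 k : (0 < k)%N -> (k%:R : K) != 0.
Proof. by move=> k0; have /pcharf0P -> := charK0; rewrite -lt0n. Qed.

Lemma cp_neq0 s : cp c s != 0.
Proof. by rewrite /cp; apply/prodf_neq0 => i _; exact: hc. Qed.

Lemma homog0 d f m : f \is d.-homog -> mdeg m != d -> f@_m = 0.
Proof. move=> fh ne; exact: (dhomog_nemf_coeff fh ne). Qed.

Lemma inj0 j f : (j <= 3)%N -> f \is 0.-homog ->
  in_ideal I (L ^+ j * f) -> in_ideal I f.
Proof.
move=> j3 fh /idlE H.
have /(ideal_van hsub) H3 : in_ideal I (L ^+ 3 * f).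
  apply/idlE; rewrite -(subnK j3) exprD -mulrA; exact: idlM.
have [F FF] := exists_facet hD; have [FD cF] := facetP hpure FF.
have := H3 F FD; rewrite coefLX (big_pred1 set0); last first.
  move=> t /=; rewrite cF; apply/andP/eqP => [[_]|->]; last by rewrite sub0set cards0.
  move=> /eqP h; apply/eqP; rewrite -cards_eq0; by rewrite -(eqn_add2r 3) h.
rewrite setD0 => /eqP; rewrite !mulf_eq0 (negbTE (natr_neq0 (k:=3`!) _)) // (negbTE (cp_neq0 _)) /= => /eqP f0.
apply: van_ideal => s sD.
case: (eqVneq s set0) => [->//|ne]; apply: homog0 fh _.
by rewrite mdeg_mono cards_eq0.
Qed.


Lemma mono1 (i : 'I_n) : mono [set i] = U_(i)%MM.
Proof. by apply/mnmP => k; rewrite monoE mnm1E inE eq_sym. Qed.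

Lemma lin_homog (a : 'I_n -> K) : (\sum_i a i *: 'X_i : {mpoly K[n]}) \is 1.-homog.
Proof.
apply: rpred_sum => i _; apply: rpredZ; rewrite dhomogX; exact/eqP/mdeg1.
Qed.

Lemma coefLX1 j f s : #|s| = j.+1 ->
  (L ^+ j * f)@_(mono s) = j`!%:R * \sum_(i in s) cp c (s :\ i) * f@_(mono [set i]).
Proof.
move=> cs; rewrite coefLX; congr (_ * _).
transitivity (\sum_(t in [set [set i] | i in s]) cp c (s :\: t) * f@_(mono t)); last first.
  by rewrite big_imset //= => x y _ _ /setP /(_ x); rewrite !inE eqxx => /esym/eqP.
apply: eq_bigl => t; rewrite cs; apply/andP/imsetP => [[ts /eqP ct]|[i iS ->]].
  have /cards1P [i ti] : #|t| == 1%N by rewrite -(eqn_add2r j) add1n ct.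
  exists i => //; apply: (subsetP ts); by rewrite ti inE.
by rewrite sub1set iS cards1 add1n.
Qed.

Lemma edge_eq f a b : a != b -> [set a; b] \in D -> in_ideal I (L * f) ->
  c b * f@_(mono [set a]) + c a * f@_(mono [set b]) = 0.
Proof.
move=> ab eD /(ideal_van hsub) H; move: (H _ eD).
rewrite -[L]expr1 coefLX1 ?cards2 ?ab // (_ : 1`! = 1%N) // mul1r big_setU1 ?inE //= big_set1.
have -> : [set a; b] :\ a = [set b] by rewrite setU1K // inE.
have -> : [set a; b] :\ b = [set a] by rewrite setUC setU1K // inE eq_sym.
by rewrite /cp !big_set1.
Qed.

Lemma inj11 f : f \is 1.-homog -> in_ideal I (L ^+ 1 * f) -> in_ideal I f.
Proof.
rewrite expr1 => fh H; apply: van_ideal => s sD.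
case: (eqVneq #|s| 1%N) => [/eqP /cards1P [k ->]|ne]; last first.
  by apply: homog0 fh _; rewrite mdeg_mono.
have [F FF kF] := vertex_facet hD k; have [FD cF] := facetP hpure FF.
have : #|F :\ k| == 2%N by move: (cardsD1 k F); rewrite kF cF => /eqP; rewrite eq_sym /= add1n eqSS.
move=> /cards2P [l [m [lm Fk]]].
have lF : l \in F :\ k by rewrite Fk !inE eqxx.
have mF : m \in F :\ k by rewrite Fk !inE eqxx orbT.
move: lF mF; rewrite !inE => /andP [lk lF] /andP [mk mF].
have eD a b : a \in F -> b \in F -> [set a; b] \in D.
  move=> aF bF; apply: hsub FD _; apply/subsetP => x; rewrite !inE => /orP [] /eqP ->; done.
have e1 := edge_eq (f := f) (a := k) (b := l) _ (eD _ _ kF lF) H.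
have e2 := edge_eq (f := f) (a := k) (b := m) _ (eD _ _ kF mF) H.
have e3 := edge_eq (f := f) (a := l) (b := m) lm (eD _ _ lF mF) H.
rewrite eq_sym in lk; rewrite eq_sym in mk; move: (e1 lk) (e2 mk) => {e1 e2} e1 e2.
set bk := f@_(mono [set k]) in e1 e2 *; set bl := f@_(mono [set l]) in e1 e3 *;
set bm := f@_(mono [set m]) in e2 e3 *.
have : 2%:R * c l * c m * bk = 0.
  have -> : 2%:R * c l * c m * bk =
    c l * (c m * bk + c k * bm) + c m * (c l * bk + c k * bl) - c k * (c m * bl + c l * bm) by ring.
  by rewrite e1 e2 e3 !mulr0 addr0 subr0.
by move/eqP; rewrite !mulf_eq0 (negbTE (natr_neq0 (k:=2) _)) // !(negbTE (hc _)) /= => /eqP.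
Qed.


Lemma coef_lin (a : 'I_n -> K) i : (\sum_k a k *: 'X_k : {mpoly K[n]})@_(mono [set i]) = a i.
Proof.
rewrite mono1 raddf_sum /= (bigD1 i) //= mcoeffZ mcoeffXU eqxx mulr1 big1 ?addr0 //.
by move=> k /negbTE ki; rewrite mcoeffZ mcoeffXU ki mulr0.
Qed.

Lemma high i j g : (3 < i + j)%N -> g \is (i + j).-homog -> in_ideal I g.
Proof.
move=> hij gh; apply: van_ideal => s sD; apply: homog0 gh _; rewrite mdeg_mono.
apply/eqP => E; have := card_face hpure sD; by rewrite E leqNgt hij.
Qed.

Hypothesis Hsolve : forall gam : {set 'I_n} -> K, exists bet : 'I_n -> K,
  forall F, F \in facets D -> \sum_(i in F) bet i = gam F.

Lemma surj12 g : g \is 3.-homog ->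
  exists f, f \is 1.-homog /\ in_ideal I (g - L ^+ 2 * f).
Proof.
move=> gh.
have [bet Hb] := Hsolve (fun F => g@_(mono F) / (2%:R * cp c F)).
exists (\sum_i (c i * bet i) *: 'X_i); split; first exact: lin_homog.
apply: van_ideal => s sD; rewrite mcoeffB.
case: (eqVneq #|s| 3%N) => [cs|ne].
  have sF := face3_facet hpure sD cs.
  rewrite (coefLX1 (j:=2)) // (_ : 2`! = 2%N) //.
  under eq_bigr => i iS do rewrite coef_lin mulrA -[cp c _ * c i]mulrC -(big_setD1 _ iS).
  rewrite -mulr_sumr Hb // mulrA [_ * (_ / _)]mulrC divfK ?subrr //.
  by rewrite mulf_neq0 ?natr_neq0 ?cp_neq0.
rewrite (homog0 gh) ?mdeg_mono // coefLX big1 ?mulr0 ?subrr //.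
move=> t /andP[_ /eqP ct]; rewrite (homog0 (lin_homog _)) ?mulr0 // mdeg_mono.
by apply/eqP => t1; move: ne; rewrite -ct t1 eqxx.
Qed.

Lemma slp_all i j : mult_full_rank I L i j.
Proof.
case: (ltnP 3 (i + j)) => hij.
  by right => g gh; exists 0; split; [exact: dhomog0 | rewrite mulr0 subr0; exact: high gh].
case: j hij => [|j] hij.
  by left => f _; rewrite expr0 mul1r.
case: i hij => [|[|[|i]]] hij.
- by left => f fh; apply: inj0.
- case: j hij => [|[|j]] hij.
  + by left => f fh; apply: inj11.
  + by right => g gh; apply: surj12.
  + by exfalso; move: hij; rewrite !addSn !addnS.
- case: j hij => [|j] hij.
  + right => g gh; have [f1 [f1h Hf1]] := surj12 gh.
    exists (L * f1); split; first by have := dhomogM (lin_homog c) f1h.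
    by rewrite expr1 mulrA -expr2.
  + by exfalso; move: hij; rewrite !addSn !addnS.
- by exfalso; move: hij; rewrite !addSn !addnS.
Qed.

End SLP.


Section Rees.
Variable K : fieldType.
Variable n : nat.
Variable D : {set {set 'I_n}}.
Local Notation gs := (facet_gens K D).
Local Notation s := (size (facet_gens K D)).

Definition Fs (k : nat) := nth set0 (enum (facets D)) k.

Lemma size_gs : s = #|facets D|.
Proof. by rewrite size_map cardE. Qed.

Lemma gsE (k : 'I_s) : gs`_k = 'X_[mono (Fs k)].
Proof.
have ks : (k < size (enum (facets D)))%N by rewrite -(size_map (@xmon K n)).
by rewrite /facet_gens (nth_map set0) // xmonE.
Qed.

Lemma FsF (k : 'I_s) : Fs k \in facets D.
Proof.
have ks : (k < size (enum (facets D)))%N by rewrite -(size_map (@xmon K n)).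
by rewrite -mem_enum mem_nth.
Qed.

Lemma Fs_inj (k1 k2 : 'I_s) : Fs k1 = Fs k2 -> k1 = k2.
Proof.
have ks (k : 'I_s) : (k < size (enum (facets D)))%N by rewrite -(size_map (@xmon K n)).
move=> E; apply/val_inj/eqP; rewrite -(nth_uniq set0 (ks k1) (ks k2)) ?enum_uniq //.
by apply/eqP.
Qed.

Lemma Fs_surj F : F \in facets D -> exists k : 'I_s, Fs k = F.
Proof.
move=> FF; have hi : (index F (enum (facets D)) < s)%N by rewrite size_map index_mem mem_enum.
by exists (Ordinal hi); rewrite /Fs nth_index // mem_enum.
Qed.

Definition xpart (m : 'X_{1..n + s}) : 'X_{1..n} := [multinom m (lshift s i) | i < n].
Definition Em (m : 'X_{1..n + s}) : 'X_{1..n} :=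
  (xpart m + \sum_(k < s) mono (Fs k) *+ m (rshift n k))%MM.

Lemma splitL (i : 'I_n) : split (lshift s i) = inl i.
Proof. exact: (unsplitK (inl _ i)). Qed.
Lemma splitR (k : 'I_s) : split (rshift n k) = inr k.
Proof. exact: (unsplitK (inr _ k)). Qed.

Lemma reesX (m : 'X_{1..n + s}) :
  rees_map ('X_[m] : {mpoly K[n + s]}) = ('X_[Em m])%:P * 'X ^+ (wdeg m).
Proof.
rewrite /rees_map /mmap msuppX big_seq1 mcoeffX eqxx /= polyC1 mul1r.
rewrite /mmap1 big_split_ord /=.
under eq_bigr => i _ do rewrite splitL.
under [X in _ * X = _]eq_bigr => k _ do rewrite splitR exprMn.
rewrite big_split /= prodrXr.
under eq_bigr => i _ do rewrite -(rmorphXn polyC).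
under [X in _ * (X * _)]eq_bigr => k _ do rewrite -(rmorphXn polyC).
rewrite -!(rmorph_prod polyC) mulrA -(rmorphM polyC).
congr (_%:P * _); rewrite /Em mpolyXD; congr (_ * _).
  by rewrite mpolyXE_id; apply: eq_bigr => i _; rewrite mnmE.
rewrite -mprodXE; apply: eq_bigr => k _; by rewrite gsE mpolyXn.
Qed.


Hypothesis hpure : pure_of_dim 2 D.

Lemma cardFs (k : 'I_s) : #|Fs k| = 3%N.
Proof. exact: hpure (FsF k). Qed.

Lemma mdeg_xpart0 (m : 'X_{1..n + s}) : (xpart m == 0%MM) = [forall i, m (lshift s i) == 0%N].
Proof.
apply/eqP/forallP => [E i|H]; first by move/mnmP: E => /(_ i); rewrite mnmE mnm0E => ->.
by apply/mnmP => i; rewrite mnmE mnm0E; apply/eqP.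
Qed.

Lemma mdeg_Em m : mdeg (Em m) = (mdeg (xpart m) + 3 * wdeg m)%N.
Proof.
rewrite /Em mdegD mdeg_sum /wdeg big_distrr /=; congr (_ + _)%N.
by apply: eq_bigr => k _; rewrite mdegMn mdeg_mono cardFs mulnC.
Qed.

Lemma wdeg1 (m : 'X_{1..n + s}) : wdeg m = 1%N ->
  exists k : 'I_s, forall k', m (rshift n k') = (k == k') :> nat.
Proof.
rewrite /wdeg => H.
have [k kpos] : exists k : 'I_s, (0 < m (rshift n k))%N.
  apply/existsP; apply: contraT => /existsPn H0; move: H.
  by rewrite big1 // => k _; move: (H0 k); rewrite lt0n negbK => /eqP.
move: H; rewrite (bigD1 k) //= => H.
have [Hk1 Hk0] : m (rshift n k) = 1%N /\ forall k', k' != k -> m (rshift n k') = 0%N.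
  move: H; case: (m (rshift n k)) kpos => [//|[|//]] _ /= [] /eqP.
  by rewrite sum_nat_eq0 => /forall_inP H; split=> // k' /H /eqP.
exists k => k'; case: (eqVneq k k') => [<-|ne] //; apply: Hk0; by rewrite eq_sym.
Qed.

Lemma Em_U (k0 : 'I_s) : Em (U_(rshift n k0))%MM = mono (Fs k0).
Proof.
rewrite /Em (_ : xpart _ = 0%MM); last first.
  by apply/mnmP => i; rewrite mnmE mnm1E mnm0E eq_rlshift.
rewrite add0m (bigD1 k0) //= mnm1E eqxx mulm1n big1 ?addm0 // => k ne.
by rewrite mnm1E eq_rshift eq_sym (negbTE ne) mulm0n.
Qed.

Lemma Em_mono (m : 'X_{1..n + s}) (k0 : 'I_s) : wdeg m = 1%N ->
  (Em m == mono (Fs k0)) = (m == U_(rshift n k0))%MM.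
Proof.
move=> w1; apply/eqP/eqP => [E|->]; last exact: Em_U.
have := mdeg_Em m; rewrite E mdeg_mono cardFs w1 muln1 -{1}[3%N]add0n => /eqP.
rewrite eqn_add2r eq_sym mdeg_eq0 mdeg_xpart0 => /forallP x0.
have [k Hk] := wdeg1 w1.
have ek : Em m = mono (Fs k).
  rewrite /Em (_ : xpart m = 0%MM); last by apply/mnmP => i; rewrite mnmE mnm0E; apply/eqP.
  rewrite add0m (bigD1 k) //= Hk eqxx mulm1n big1 ?addm0 // => k' ne.
  by rewrite Hk eq_sym (negbTE ne) mulm0n.
have kk : k = k0 by apply: Fs_inj; apply: monoS_inj; rewrite -ek E.
subst k; apply/mnmP => j; rewrite mnm1E; case: (split_ordP j) => [i ->|k' ->].
  by rewrite eq_rlshift; apply/eqP.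
by rewrite eq_rshift Hk.
Qed.


Definition hR (i : 'I_(n + s)) : {poly {mpoly K[n]}} :=
  match split i with inl j => ('X_j)%:P | inr k => (gs`_k)%:P * 'X end.

Lemma rees_mmap (p : {mpoly K[n + s]}) : rees_map p = mmap (polyC \o @mpolyC n K) hR p.
Proof. by []. Qed.

Lemma reesE (p : {mpoly K[n + s]}) :
  rees_map p = \sum_(m <- msupp p) (p@_m)%:MP%:P * rees_map ('X_[m] : {mpoly K[n + s]}).
Proof.
rewrite {1}/rees_map /mmap; apply: eq_bigr => m _; congr (_ * _).
by rewrite /rees_map /mmap msuppX big_seq1 mcoeffX eqxx mpolyC1 polyC1 mul1r.
Qed.

Lemma mU (m : 'X_{1..n + s}) (k : 'I_s) : (forall i, m (lshift s i) = 0%N) ->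
  (forall k', m (rshift n k') = (k == k') :> nat) -> m = U_(rshift n k)%MM.
Proof.
move=> H0 H1; apply/mnmP => j; rewrite mnm1E; case: (split_ordP j) => [i ->|k' ->].
  by rewrite eq_rlshift H0.
by rewrite eq_rshift H1.
Qed.

Lemma KL (q : {mpoly K[n + s]}) : rees_map q = 0 -> linear_in_w q ->
  forall k0 : 'I_s, q@_(U_(rshift n k0)) = 0.
Proof.
move=> hq hl k0.
have w1 m : m \in msupp q -> wdeg m = 1%N by move=> mi; apply/eqP; exact: (allP hl m mi).
have E : rees_map q = (\sum_(m <- msupp q) q@_m *: 'X_[Em m])%:P * 'X.
  rewrite reesE big_seq [in RHS]big_seq rmorph_sum mulr_suml; apply: eq_bigr => m mi.
  by rewrite reesX w1 // expr1 mulrA -rmorphM /= mul_mpolyC.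
have A0 : \sum_(m <- msupp q) q@_m *: 'X_[Em m] = 0.
  by move: (congr1 (fun p : {poly {mpoly K[n]}} => p`_1) E); rewrite hq coef0 coefMX /= coefC /= => <-.
move: (congr1 (mcoeff (mono (Fs k0))) A0); rewrite mcoeff0 raddf_sum /= => H.
rewrite -[RHS]H {1}(mpolyE q) raddf_sum /= big_seq [RHS]big_seq; apply: eq_bigr => m mi.
by rewrite !mcoeffZ !mcoeffX Em_mono ?w1.
Qed.


Definition hpi (j : 'I_(n + s)) : {mpoly K[n + s]} :=
  match split j with inl _ => 0 | inr _ => 'X_j end.
Definition piw (p : {mpoly K[n + s]}) := mmap (@mpolyC (n + s) K) hpi p.

Lemma piwM : {morph piw : a b / a * b}.
Proof. exact: (mmap_is_multiplicative hpi (@mpolyC (n + s) K)).1. Qed.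

Lemma piwX (m : 'X_{1..n + s}) :
  piw 'X_[m] = if [forall i, m (lshift s i) == 0%N] then 'X_[m] else 0.
Proof.
rewrite /piw mmapX /mmap1 big_split_ord /=.
under eq_bigr => i _ do rewrite /hpi splitL.
under [X in _ * X]eq_bigr => k _ do rewrite /hpi splitR.
case: ifP => [/forallP H|/negbT /forallPn [i /negbTE Hi]].
  rewrite big1 ?mul1r; last by move=> i _; rewrite (eqP (H i)) expr0.
  rewrite mpolyXE_id big_split_ord /= [X in _ = X * _]big1 ?mul1r //.
  by move=> i _; rewrite (eqP (H i)) expr0.
rewrite (bigD1 i) //= expr0n Hi mul0r mul0r //.
Qed.

Lemma piw_q (q : {mpoly K[n + s]}) : rees_map q = 0 -> linear_in_w q -> piw q = 0.
Proof.
move=> hq hl; rewrite /piw {1}(mpolyE q) raddf_sum /= big_seq big1 // => m mi.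
rewrite mmapZ -/(piw _) piwX; case: ifP => [/forallP H|]; last by rewrite mulr0.
have w1 : wdeg m = 1%N by apply/eqP; exact: (allP hl m mi).
have [k Hk] := wdeg1 w1.
rewrite (@mU m k) //; last by move=> i; apply/eqP.
by rewrite KL // rmorph0 mul0r.
Qed.

Definition wmon (p : 'I_s -> nat) : 'X_{1..n + s} :=
  [multinom (match split j with inl _ => 0%N | inr k => p k end) | j < n + s].

Lemma wmonL p i : wmon p (lshift s i) = 0%N.
Proof. by rewrite mnmE splitL. Qed.
Lemma wmonR p k : wmon p (rshift n k) = p k.
Proof. by rewrite mnmE splitR. Qed.

Lemma piw_wmon p : piw 'X_[wmon p] = 'X_[wmon p].
Proof. by rewrite piwX; case: ifP => // /negbT /forallPn [i]; rewrite wmonL. Qed.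


Lemma xpart_wmon p : xpart (wmon p) = 0%MM.
Proof. by apply/mnmP => i; rewrite mnmE wmonL mnm0E. Qed.

Lemma Em_wmon p : Em (wmon p) = (\sum_(k < s) mono (Fs k) *+ p k)%MM.
Proof. rewrite /Em xpart_wmon add0m; apply: eq_bigr => k _; by rewrite wmonR. Qed.

Lemma wdeg_wmon p : wdeg (wmon p) = (\sum_(k < s) p k)%N.
Proof. by apply: eq_bigr => k _; rewrite wmonR. Qed.

Lemma LT : linear_type gs -> forall p q : 'I_s -> nat,
  (forall i : 'I_n, \sum_(k < s) (i \in Fs k) * p k = \sum_(k < s) (i \in Fs k) * q k)%N ->
  forall k, p k = q k.
Proof.
move=> hlin p q H.
have EE : Em (wmon p) = Em (wmon q).
  apply/mnmP => i; rewrite !Em_wmon !mnm_sumE.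
  under eq_bigr => k _ do rewrite mulmnE monoE.
  by under [RHS]eq_bigr => k _ do rewrite mulmnE monoE; exact: H.
have WW : wdeg (wmon p) = wdeg (wmon q).
  have := mdeg_Em (wmon p); have := mdeg_Em (wmon q).
  rewrite !xpart_wmon mdeg0 !add0n EE => -> /eqP; by rewrite eqn_pmul2l // => /eqP.
pose P : {mpoly K[n + s]} := 'X_[wmon p] - 'X_[wmon q].
have rP : rees_map P = 0.
  by rewrite rees_mmap mmapB -!rees_mmap !reesX EE WW subrr.
have [gs' [Hg /idlE [cs EP]]] := hlin P rP.
have piP : piw P = 0.
  rewrite EP /piw raddf_sum big1 // => i _; change (piw (cs i * gs'`_i) = 0); rewrite piwM.
  have [rq lq] := Hg _ (mem_nth 0 (ltn_ord i)).
  by rewrite (piw_q rq lq) mulr0.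
have : piw P = P by rewrite /piw mmapB -!/(piw _) !piw_wmon.
rewrite piP => /esym /eqP; rewrite subr_eq0 => /eqP E k.
move: (congr1 (mcoeff (wmon p)) E); rewrite !mcoeffX eqxx.
case: eqP => [E'|_]; first by have := congr1 (fun m : 'X_{1..n + s} => m (rshift n k)) E'; rewrite !wmonR.
by move=> /eqP; rewrite oner_eq0.
Qed.

End Rees.


Section Ratr.
Variable K : fieldType.
Hypothesis charK0 : [pchar K] =i pred0.

Lemma nz_denK (x : rat) : (denq x)%:~R != 0 :> K.
Proof.
case: (denqP x) => d ->; change ((d.+1)%:R != 0 :> K); exact: natr_neq0.
Qed.

Fact ratrK_zmod : zmod_morphism (@ratr K).
Proof.
have injZtoQ: @injective rat int intr by apply: intr_inj.
have nz_den := nz_denK.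
move=> x y.
apply: (canLR (mulfK (nz_den _))); apply: (mulIf (nz_den x)).
rewrite mulrAC mulrBl divfK ?nz_den // mulrAC -!rmorphM.
apply: (mulIf (nz_den y)); rewrite mulrAC mulrBl divfK ?nz_den //.
rewrite -!(rmorphM, rmorphB); congr _%:~R; apply: injZtoQ.
rewrite !(rmorphM, rmorphB) /= [_ - _]lock /= -lock !numqE.
by rewrite (mulrAC y) -!mulrBl -mulrA mulrAC !mulrA.
Qed.

Fact ratrK_monoid : monoid_morphism (@ratr K).
Proof.
have injZtoQ: @injective rat int intr by apply: intr_inj.
have nz_den := nz_denK.
split=> [|x y]; first by rewrite /ratr divr1.
rewrite /ratr mulrC mulrAC; apply: canLR (mulKf (nz_den _)) _; rewrite !mulrA.
do 2!apply: canRL (mulfK (nz_den _)) _; rewrite -!rmorphM; congr _%:~R.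
apply: injZtoQ; rewrite !rmorphM [x * y]lock /= !numqE -lock.
by rewrite -!mulrA mulrA mulrCA -!mulrA (mulrCA y).
Qed.

Definition ratrK : {rmorphism rat -> K} :=
  HB.pack (@ratr K) (GRing.isZmodMorphism.Build _ _ _ ratrK_zmod)
                    (GRing.isMonoidMorphism.Build _ _ _ ratrK_monoid).

End Ratr.


Section Solve.
Variable K : fieldType.
Hypothesis charK0 : [pchar K] =i pred0.
Variable n : nat.
Variable D : {set {set 'I_n}}.
Hypothesis hpure : pure_of_dim 2 D.
Hypothesis hlin : linear_type (facet_gens K D).
Local Notation s := (size (facet_gens K D)).

Definition Mq : 'M[rat]_(s, n) := \matrix_(k, i) ((i \in Fs D k)%:R).

Lemma MqE k i : Mq k i = (i \in Fs D k)%:R.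
Proof. by rewrite mxE. Qed.

Lemma rowfree_Mq : row_free Mq.
Proof.
apply: contraT; rewrite -kermx_eq0 => nz.
have [[r j] /= Hrj] : exists rj : 'I_s * 'I_s, kermx Mq rj.1 rj.2 != 0.
  case: (pickP (fun rj : 'I_s * 'I_s => kermx Mq rj.1 rj.2 != 0)) => [rj H|H0]; first by exists rj.
  exfalso; move/negP: nz; apply; apply/eqP/matrixP => a b.
  by move: (H0 (a, b)) => /= /negbFE /eqP ->; rewrite mxE.
pose v : 'I_s -> rat := fun k => kermx Mq r k.
have Hker i : \sum_k v k * (i \in Fs D k)%:R = 0.
  transitivity ((kermx Mq *m Mq) r i); last by rewrite mulmx_ker mxE.
  by rewrite [LHS in _ = LHS]mxE; apply: eq_bigr => k _; rewrite MqE.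
pose d : rat := \prod_k (denq (v k))%:~R.
pose z k : int := numq (v k) * \prod_(l | l != k) denq (v l).
have Hz k : v k * d = (z k)%:~R.
  by rewrite /d (bigD1 k) //= mulrA -numqE /z rmorphM rmorph_prod.
have dnz : d != 0 by apply/prodf_neq0 => k _; rewrite intr_eq0 denq_neq0.
have Zker i : \sum_k z k * (i \in Fs D k)%:R = 0.
  apply: (@intr_inj rat); rewrite rmorph0 rmorph_sum /=.
  transitivity (d * \sum_k v k * (i \in Fs D k)%:R); last by rewrite Hker mulr0.
  by rewrite mulr_sumr; apply: eq_bigr => k _; rewrite rmorphM /= -Hz rmorph_nat mulrCA mulrA.
pose p k := if (0 <= z k) then `|z k|%N else 0%N.
pose q k := if (0 <= z k) then 0%N else `|z k|%N.
have zpq k : z k = (p k)%:R - (q k)%:R :> int.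
  rewrite /p /q; case: ifP => h.
    by rewrite subr0 natz gez0_abs.
  by rewrite sub0r natz ltz0_abs ?opprK // ltNge h.
have nat_eq (i : 'I_n) : (\sum_(k < s) (i \in Fs D k) * p k = \sum_(k < s) (i \in Fs D k) * q k)%N.
  apply/eqP; rewrite -(eqr_nat int) !natr_sum -subr_eq0 -sumrB.
  rewrite -[X in _ == X](Zker i); apply/eqP; apply: eq_bigr => k _.
  by rewrite zpq mulrBl !natrM; congr (_ - _); exact: mulrC.
have pq := LT hpure hlin nat_eq j.
have zj : z j = 0 by rewrite zpq pq subrr.
have : v j * d = 0 by rewrite Hz zj.
by move/eqP; rewrite mulf_eq0 (negbTE dnz) orbF (negbTE Hrj).
Qed.


Lemma solve (gam : {set 'I_n} -> K) : exists bet : 'I_n -> K,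
  forall F, F \in facets D -> \sum_(i in F) bet i = gam F.
Proof.
pose MK := map_mx (ratrK charK0) Mq.
have rf : row_free MK by rewrite /row_free mxrank_map; exact: rowfree_Mq.
have [B HB] := row_freeP rf.
pose g : 'cV[K]_s := \col_k gam (Fs D k).
pose bc := B *m g.
exists (fun i => bc i 0) => F FF.
have [k <-] := Fs_surj K FF.
have : (MK *m bc) k 0 = gam (Fs D k) by rewrite mulmxA HB mul1mx mxE.
rewrite mxE => <-; rewrite [LHS]big_mkcond /=; apply: eq_bigr => i _.
rewrite /MK [X in _ = X * _]mxE MqE rmorph_nat; by case: (i \in Fs D k); rewrite ?mul1r ?mul0r.

Qed.

End Solve.

Unset Implicit Arguments.


Theorem corollary4p2 (K : fieldType)
  (charK0 : [pchar K] =i pred0)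
  (infK : forall s : seq K, exists x : K, x \notin s)
  (n : nat) (D : {set {set 'I_n}})
  (hD : simplicial_complex D)
  (hpure : pure_of_dim 2 D)
  (hlin : linear_type (facet_gens K D)) :
  strong_lefschetz (AD_gens K D).
Proof.
exists (\prod_(i < n) 'X_i); split.
  rewrite mprodXE; apply/eqP => /(congr1 (mcoeff (\sum_(i < n) U_(i))%MM)).
  by rewrite mcoeffX eqxx mcoeff0 => /eqP; rewrite oner_eq0.
move=> c Pc.
have hc i : c i != 0.
  by apply: contra Pc => /eqP ci; rewrite rmorph_prod (bigD1 i) //= mevalXU ci mul0r.
exact: (slp_all charK0 hD hpure hc (solve charK0 hpure hlin)).
Qed.
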